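(* In the standing setting below, let $X_i=(x_i,u_i)\in\mathbb{X}\times\mathbb{R}$ for $i=0,1$, and suppose $F_{X_0X_1}(x_i)=u_i$ for $i=0,1$. Then there exist $y\in\mathbb{Y}$ and $h\in\mathbb{R}$ such that $-c(x_i,y)+h=u_i$ for $i=0,1$.
   Context: Standing setting: $\mathbb{X},\mathbb{Y}\subset\mathbb{R}^n$ are compact with non-empty interior; $c:\mathbb{X}\times\mathbb{Y}\to\mathbb{R}$ has continuous $D_xc$, $D_yc$, and continuous mixed second derivatives with $D^2_{xy}c=(D^2_{yx}c)^T$; for each $x$ the map $y\mapsto -D_xc(x,y)$ is injective on $\mathbb{Y}$ and for each $y$ the map $x\mapsto -D_yc(x,y)$ is injective on $\mathbb{X}$; $D^2_{xy}c(x,y)$ is invertible everywhere; for every $y$ the set $\{-D_yc(x,y):x\in\mathbb{X}\}$ is convex and for every $x$ the set $\{-D_xc(x,y):y\in\mathbb{Y}\}$ is convex. $c$-chord: for $X_i=(x_i,u_i)\in\mathbb{X}\times\mathbb{R}$, $F_{X_0X_1}(x)=\sup\{-c(x,y)+h: y\in\mathbb{Y},h\in\mathbb{R},-c(x_i,y)+h\le u_i, i=0,1\}$. *)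

(* Defs.v *)
From HB Require Import structures.
From mathcomp Require Import all_boot all_order all_algebra.
From mathcomp Require Import all_classical all_reals all_analysis.
Set Implicit Arguments. Unset Strict Implicit. Unset Printing Implicit Defensive.
Import Order.TTheory GRing.Theory Num.Theory.
Import numFieldNormedType.Exports.
Local Open Scope classical_set_scope.
Local Open Scope ring_scope.

(* Points of R^n are row vectors 'rV[R]_n; delta_mx 0 i is the i-th standard basis vector. *)

Definition Dx (R : realType) (n : nat) (c : 'rV[R]_n -> 'rV[R]_n -> R)
  (x y : 'rV[R]_n) : 'rV[R]_n :=
  \row_i 'D_(delta_mx 0 i) (fun x' => c x' y) x.

Definition Dy (R : realType) (n : nat) (c : 'rV[R]_n -> 'rV[R]_n -> R)
  (x y : 'rV[R]_n) : 'rV[R]_n :=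
  \row_j 'D_(delta_mx 0 j) (fun y' => c x y') y.

Definition Dxy (R : realType) (n : nat) (c : 'rV[R]_n -> 'rV[R]_n -> R)
  (x y : 'rV[R]_n) : 'M[R]_n :=
  \matrix_(i, j) ('D_(delta_mx 0 j) (fun y' => Dx c x y') y) 0 i.

Definition Dyx (R : realType) (n : nat) (c : 'rV[R]_n -> 'rV[R]_n -> R)
  (x y : 'rV[R]_n) : 'M[R]_n :=
  \matrix_(j, i) ('D_(delta_mx 0 i) (fun x' => Dy c x' y) x) 0 j.

Definition standing_setting (R : realType) (n : nat) (X Y : set 'rV[R]_n)
  (c : 'rV[R]_n -> 'rV[R]_n -> R) : Prop :=
  (compact X /\ compact Y /\ X° !=set0 /\ Y° !=set0) /\
   ({within X `*` Y, continuous (fun p => c p.1 p.2)}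
   /\ (forall x y, X x -> Y y ->
        differentiable (fun x' => c x' y) x /\ differentiable (fun y' => c x y') y)
   /\ {within X `*` Y, continuous (fun p => Dx c p.1 p.2)}
   /\ {within X `*` Y, continuous (fun p => Dy c p.1 p.2)}) /\
   (
   (forall x y, X x -> Y y ->
        differentiable (fun y' => Dx c x y') y /\ differentiable (fun x' => Dy c x' y) x)
   /\ {within X `*` Y, continuous (fun p => Dxy c p.1 p.2)}
   /\ {within X `*` Y, continuous (fun p => Dyx c p.1 p.2)}
   /\ (forall x y, X x -> Y y -> Dxy c x y = (Dyx c x y)^T)) /\
   (
   (forall x, X x -> {in Y &, injective (fun y => - Dx c x y)})
   /\ (forall y, Y y -> {in X &, injective (fun x => - Dy c x y)})) /\
   (forall x y, X x -> Y y -> Dxy c x y \in unitmx) /\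
   (
   (forall y, Y y ->
      convex_set ([set - Dy c x y | x in X] : set (convex_lmodType 'rV[R]_n)))
   /\ (forall x, X x ->
      convex_set ([set - Dx c x y | y in Y] : set (convex_lmodType 'rV[R]_n)))).

Definition cchord (R : realType) (n : nat) (Y : set 'rV[R]_n)
  (c : 'rV[R]_n -> 'rV[R]_n -> R) (x0 : 'rV[R]_n) (u0 : R)
  (x1 : 'rV[R]_n) (u1 : R) (x : 'rV[R]_n) : R :=
  sup [set r | exists y h, [/\ Y y, - c x0 y + h <= u0, - c x1 y + h <= u1
                              & r = - c x y + h]].

(* Main.v *)
Require Import Defs.
From HB Require Import structures.
From mathcomp Require Import all_boot all_order all_algebra.
From mathcomp Require Import all_classical all_reals all_analysis.
From mathcomp Require Import lra.
Import Order.TTheory GRing.Theory Num.Theory.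
Import numFieldNormedType.Exports.
Local Open Scope classical_set_scope.
Local Open Scope ring_scope.
Section S.
Variables (R : realType) (V : normedModType R).

Lemma seg_lemma (K P Q : set V) (p q : V) :
  convex_set (K : set (convex_lmodType V)) -> K p -> K q -> P p -> Q q ->
  closed P -> closed Q -> K `<=` P `|` Q -> P `&` Q = set0 -> False.
Proof.
move=> cK Kp Kq Pp Qq cP cQ KPQ PQ0.
pose s := fun t : R => t *: p + (1 - t) *: q.
have cs : continuous s.
  move=> t; apply: cvgD; apply: cvgZl => //; apply: cvgB => //; exact: cvg_cst.
have Sc : connected (s @` `[0, 1]).
  apply: connected_continuous_connected; first exact: segment_connected.
  exact: continuous_subspaceT.
have SK : s @` `[0, 1] `<=` K.
  move=> _ [t /= t01 <-].
  move: t01; rewrite in_itv /= => /andP[t0 t1].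
  have := cK p q (Itv01 t0 t1); rewrite !inE => /(_ Kp Kq).
  by [].
have sep : separated P Q.
  by rewrite /separated -(closure_id P).1 // -(closure_id Q).1 // PQ0 setIC PQ0.
have := connected_subset sep (subset_trans SK KPQ) Sc.
case=> H.
- have : P q.
    apply: H; exists 0; first by rewrite /= in_itv /= lexx ler01.
    by rewrite /s scale0r add0r subr0 scale1r.
  by move=> Pq; have : (P `&` Q) q by []; rewrite PQ0.
- have : Q p.
    apply: H; exists 1; first by rewrite /= in_itv /= lexx ler01.
    by rewrite /s scale1r subrr scale0r addr0.
  by move=> Qp; have : (P `&` Q) p by []; rewrite PQ0.
Qed.

Lemma ivt_lemma (Y : set V) (g : V -> R) (phi : V -> V) (t : R) ya yb :
  compact Y -> {within Y, continuous g} -> {within Y, continuous phi} ->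
  {in Y &, injective phi} ->
  convex_set ([set phi y | y in Y] : set (convex_lmodType V)) ->
  Y ya -> Y yb -> g ya <= t -> t <= g yb -> exists2 y, Y y & g y = t.
Proof.
move=> cY cg cphi iphi cvx Ya Yb ga gb.
apply: contrapT => Hn.
have Hne : forall y, Y y -> g y != t.
  by move=> y Yy; apply/eqP => gy; apply: Hn; exists y.
have hV : hausdorff_space V := @norm_hausdorff _ _.
have clY : closed Y := compact_closed hV cY.
have clpre : forall D : set R, closed D -> closed (Y `&` g @^-1` D).
  move=> D cD; rewrite setIC.
  have : closed ((g @^-1` D : set (subspace Y))).
    by apply: preimage_closed => // x _; apply: cg.
  by rewrite -closed_setIS.
pose A := Y `&` g @^-1` [set x | x <= t].
pose B := Y `&` g @^-1` [set x | t <= x].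
have cA : compact A.
  by apply: (subclosed_compact (clpre _ (@closed_le _ t)) cY) => x [].
have cB : compact B.
  by apply: (subclosed_compact (clpre _ (@closed_ge _ t)) cY) => x [].
have cphiA : {within A, continuous phi}.
  by apply: (continuous_subspaceW _ cphi) => x [].
have cphiB : {within B, continuous phi}.
  by apply: (continuous_subspaceW _ cphi) => x [].
apply: (@seg_lemma [set phi y | y in Y] (phi @` A) (phi @` B) (phi ya) (phi yb) cvx).
- by exists ya.
- by exists yb.
- by exists ya.
- by exists yb.
- exact: compact_closed hV (continuous_compact cphiA cA).
- exact: compact_closed hV (continuous_compact cphiB cB).
- move=> _ [y Yy <-]; case: (lerP (g y) t) => gy.
    by left; exists y.
  by right; exists y => //; split => //; rewrite /= ltW.
- apply/seteqP; split => // _ [[a [Ya1 ga1] <-] [b [Yb1 gb1] eab]].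
  have ab : a = b by apply: iphi; rewrite ?inE.
  subst b; have := Hne a Ya1; rewrite eq_le ga1 /=.
  by move: gb1 => /= ->.
Qed.

Lemma sup_key (Y : set V) (g : V -> R) (S : set R) (u v : R) :
  compact Y -> Y !=set0 -> {within Y, continuous g} -> S !=set0 ->
  (forall r, S r -> exists2 y, Y y & r <= v + g y) -> sup S = u ->
  exists2 y, Y y & u - v <= g y.
Proof.
move=> cY Y0 cg S0 HS supS.
apply: contrapT => Hn.
have Hlt : forall y, Y y -> g y < u - v.
  by move=> y Yy; rewrite ltNge; apply/negP => h; apply: Hn; exists y.
have cG : compact (g @` Y) := continuous_compact cg cY.
have G0 : (g @` Y) !=set0 by case: Y0 => y Yy; exists (g y), y.
have [_ hub] := compact_has_sup G0 cG.
have clG : closed (g @` Y) := compact_closed (@norm_hausdorff _ _) cG.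
have [ym Yym gym] : (g @` Y) (sup (g @` Y)) by apply: clG; exact: closure_sup.
have : sup S <= v + sup (g @` Y).
  apply: ge_sup => // r Sr; have [y Yy ry] := HS r Sr.
  apply: (le_trans ry); rewrite lerD2l; apply: ub_le_sup => //; by exists y.
rewrite supS -gym => h.
have := Hlt ym Yym; rewrite ltNge => /negP; apply.
by rewrite lerBlDl.
Qed.

Lemma slice (T1 T2 Z : topologicalType) (A : set T1) (B : set T2)
  (F : T1 * T2 -> Z) a :
  {within A `*` B, continuous F} -> A a -> {within B, continuous (fun b => F (a, b))}.
Proof.
move=> /continuous_subspace_prodP cF Aa.
rewrite continuous_subspace_in => b Bb.
have h := cF (a, b); rewrite inE in h; have {h} h := h (conj Aa (set_mem Bb)).
apply: (@continuous_comp _ _ _ (fun b : subspace B => ((a : subspace A), b))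
  (F : subspace A * subspace B -> Z)) => //.
apply: cvg_pair => //; exact: cvg_cst.
Qed.
End S.

Theorem lemma3p6 (R : realType) (n : nat) (X Y : set 'rV[R]_n)
  (c : 'rV[R]_n -> 'rV[R]_n -> R) (x0 x1 : 'rV[R]_n) (u0 u1 : R) :
  standing_setting X Y c ->
  X x0 -> X x1 ->
  cchord Y c x0 u0 x1 u1 x0 = u0 ->
  cchord Y c x0 u0 x1 u1 x1 = u1 ->
  exists y h, [/\ Y y, - c x0 y + h = u0 & - c x1 y + h = u1].
Proof.
move=> [[_ [cY [_ iY]]] [[cc [_ [cDx _]]] [_ [[injx _] [_ [_ cvxx]]]]]] Xx0 Xx1 F0 F1.
have Y0 : Y !=set0 by case: iY => y /interior_subset Yy; exists y.
have cc0 : {within Y, continuous (fun y => c x0 y)} := @slice _ _ _ _ _ _ _ cc Xx0.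
have cc1 : {within Y, continuous (fun y => c x1 y)} := @slice _ _ _ _ _ _ _ cc Xx1.
pose g y := c x1 y - c x0 y.
have cg : {within Y, continuous g} by move=> y; apply: cvgB; [exact: cc1|exact: cc0].
have cgN : {within Y, continuous (fun y => - g y)} by move=> y; apply: cvgN; exact: cg.
have cphi : {within Y, continuous (fun y => - Dx c x0 y)}.
  move=> y; apply: cvgN; exact: (@slice _ _ _ _ _ _ _ cDx Xx0).
have [y0 Yy0] := Y0.
pose h0 := Num.min (u0 + c x0 y0) (u1 + c x1 y0).
have hA : - c x0 y0 + h0 <= u0.
  by rewrite addrC -lerBrDr opprK /h0 ge_min lexx.
have hB : - c x1 y0 + h0 <= u1.
  by rewrite addrC -lerBrDr opprK /h0 ge_min lexx orbT.
have [yb Yyb gb] : exists2 y, Y y & u0 - u1 <= g y.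
  apply: (@sup_key _ _ _ _ _ _ _ cY Y0 cg _ _ F0).
    by exists (- c x0 y0 + h0), y0, h0.
  move=> r [y [h [Yy hy0 hy1 ->]]]; exists y => //.
  rewrite /g; lra.
have [ya Yya ga] : exists2 y, Y y & u1 - u0 <= - g y.
  apply: (@sup_key _ _ _ _ _ _ _ cY Y0 cgN _ _ F1).
    by exists (- c x1 y0 + h0), y0, h0.
  move=> r [y [h [Yy hy0 hy1 ->]]]; exists y => //.
  rewrite /g; lra.
have [y Yy gy] := @ivt_lemma _ _ _ _ _ (u0 - u1) _ _ cY cg cphi (injx _ Xx0) (cvxx _ Xx0) Yya Yyb
  ltac:(lra) gb.
exists y, (u0 + c x0 y); split => //; rewrite /g in gy; lra.
Qed.
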